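(* Let $N\ge1$, $K\ge2$ be integers with $K$ even and $N$ divisible by $K$, and consider the constant-sum game $\mathcal{B}_1(N,K)$. A pure strategy $s\in S$ is used with positive probability in some Nash equilibrium of $\mathcal{B}_1(N,K)$ (i.e., there exist a Nash equilibrium $(\sigma^A,\sigma^B)$ and a player $i$ with $\sigma^i(s)>0$) if and only if $s_k\le 2N/K$ for every battlefield $k\in\{1,\ldots,K\}$.
   Context: Fix integers $N\ge1$, $K\ge2$ and a real number $\alpha$. The Colonel Blotto game $\mathcal{B}_\alpha(N,K)$ is the two-player simultaneous-move game with players $A,B$, each with pure strategy set $S=\{s\in\{0,1,\ldots,N\}^K:\sum_{k=1}^K s_k=N\}$, in which the payoff of player $i$ at the pure profile $(s^i,s^{-i})$ is $\pi^i(s^i,s^{-i})=\sum_{k=1}^K\big(\mathbf 1[s^i_k>s^{-i}_k]+\tfrac{\alpha}{2}\mathbf 1[s^i_k=s^{-i}_k]\big)$. For $\alpha=1$ the payoffs of the two players always sum to $K$. Mixed strategies are probability distributions on $S$, with expected payoffs under independent randomization; a Nash equilibrium is a mixed profile from which no unilateral deviation raises a player's expected payoff. *)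

(* Defs.v *)
From HB Require Import structures.
From mathcomp Require Import all_boot all_order all_algebra.
From mathcomp Require Import reals.
Set Implicit Arguments. Unset Strict Implicit. Unset Printing Implicit Defensive.
Import Order.TTheory GRing.Theory Num.Theory.
Local Open Scope ring_scope.

(* Pure strategies of the Colonel Blotto game B(N,K): allocations
   s : {1..K} -> {0..N} with sum_k s_k = N. Battlefield k is index k-1. *)
Definition strat (N K : nat) : finType :=
  {f : {ffun 'I_K -> 'I_N.+1} | (\sum_(k < K) (f k : nat) == N)%N}.

Definition alloc N K (s : strat N K) (k : 'I_K) : nat := (val s) k.

Definition payoff (R : realType) (alpha : R) N K (s s' : strat N K) : R :=
  \sum_(k < K) (((alloc s' k < alloc s k)%N)%:R
                + alpha / 2%:R * ((alloc s k == alloc s' k))%:R).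

Definition is_mixed (R : realType) N K (p : {ffun strat N K -> R}) : Prop :=
  (forall s, 0 <= p s) /\ \sum_s p s = 1.

Definition exp_payA (R : realType) (alpha : R) N K
  (pA pB : {ffun strat N K -> R}) : R :=
  \sum_s \sum_t pA s * pB t * payoff alpha s t.

Definition exp_payB (R : realType) (alpha : R) N K
  (pA pB : {ffun strat N K -> R}) : R :=
  \sum_s \sum_t pA s * pB t * payoff alpha t s.

Definition nash (R : realType) (alpha : R) N K (pA pB : {ffun strat N K -> R}) : Prop :=
  [/\ is_mixed pA, is_mixed pB,
      (forall qA, is_mixed qA -> exp_payA alpha qA pB <= exp_payA alpha pA pB) &
      (forall qB, is_mixed qB -> exp_payB alpha pA qB <= exp_payB alpha pA pB)].

(* Main.v *)
Require Import Defs.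
From HB Require Import structures.
From mathcomp Require Import all_boot all_order all_algebra.
From mathcomp Require Import reals.
From mathcomp Require Import zify ring lra.
Import Order.TTheory GRing.Theory Num.Theory.
Local Open Scope ring_scope.
Set Implicit Arguments. Unset Strict Implicit. Unset Printing Implicit Defensive.

Lemma mk_proof N K (f : 'I_K -> nat) (hb : forall k, (f k <= N)%N)
  (hs : (\sum_(k < K) f k)%N = N) :
  (\sum_(k < K) ([ffun k => (inord (f k) : 'I_N.+1)] k : nat) == N)%N.
Proof.
apply/eqP; apply: etrans hs; apply: eq_bigr => k _.
by rewrite ffunE inordK // ltnS.
Qed.

Definition mkstrat N K (f : 'I_K -> nat) (hb : forall k, (f k <= N)%N)
  (hs : (\sum_(k < K) f k)%N = N) : strat N K :=
  exist (fun F : {ffun 'I_K -> 'I_N.+1} => (\sum_(k < K) (F k : nat) == N)%N)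
    _ (mk_proof hb hs).

Lemma alloc_mk N K f hb hs k : alloc (@mkstrat N K f hb hs) k = f k.
Proof. by rewrite /alloc /= ffunE inordK // ltnS. Qed.

Lemma sum_alloc N K (t : strat N K) : (\sum_k alloc t k)%N = N.
Proof. by case: t => f /= H; apply/eqP. Qed.

Definition g (R : realType) (c v : nat) : R :=
  ((v < c)%N)%:R + 1 / 2%:R * ((c == v))%:R.

Lemma payoffE (R : realType) N K (t x : strat N K) :
  payoff (1:R) t x = \sum_k g R (alloc t k) (alloc x k).
Proof. by []. Qed.

Lemma g_cs (R : realType) a b : g R a b + g R b a = 1.
Proof.
rewrite /g; case: (ltngtP a b) => H /=; lra.
Qed.

Lemma payoff_cs (R : realType) N K (t x : strat N K) :
  payoff (1:R) t x + payoff 1 x t = K%:R.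
Proof.
rewrite !payoffE -big_split /=.
rewrite (eq_bigr (fun _ => 1)) ?sumr_const ?card_ord // => k _.
by rewrite g_cs.
Qed.

Definition Gs (R : realType) M (c : nat) : R := \sum_(v < M.+1) g R c v.

Lemma sum_g (R : realType) M c :
  \sum_(v < M) g R c v = (minn c M)%:R + 1 / 2%:R * ((c < M)%N)%:R.
Proof.
elim: M => [|M IH]; first by rewrite big_ord0 /minn; case: c => //= *; lra.
rewrite big_ord_recr /= IH /g /minn ltnS.
case: (ltngtP c M) => H /=; rewrite ?natrS; try lra.
by subst c; lra.
Qed.

Lemma Gs_le (R : realType) M c : Gs R M c <= c%:R + 1 / 2%:R.
Proof.
rewrite /Gs sum_g /minn; case: ltnP => H /=; first lra.
have : (M.+1)%:R <= c%:R :> R by rewrite ler_nat.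
lra.
Qed.

Lemma Gs_eq (R : realType) M c : (c <= M)%N -> Gs R M c = c%:R + 1 / 2%:R.
Proof. by move=> H; rewrite /Gs sum_g /minn ltnS H /=; lra. Qed.

Lemma Gs_lt (R : realType) M c : (M < c)%N -> Gs R M c < c%:R + 1 / 2%:R.
Proof.
move=> H; rewrite /Gs sum_g /minn ltnS leqNgt H /=.
have : (M.+1)%:R <= c%:R :> R by rewrite ler_nat.
lra.
Qed.

Definition Uf (R : realType) N K M (t : strat N K) : R :=
  \sum_(k < K) Gs R M (alloc t k) / M.+1%:R.

Lemma Uf_total (R : realType) h M N (eN : N = (h * M)%N) (t : strat N (h + h)) :
  \sum_(k < h + h) ((alloc t k)%:R + 1 / 2%:R) / M.+1%:R = h%:R :> R.
Proof.
rewrite -mulr_suml big_split /= -natr_sum sum_alloc sumr_const card_ord eN.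
rewrite -[_ *+ (h + h)]mulr_natr natrM natrD -natr1.
have hM : 0 < M%:R + 1 :> R by have := ler0n R M; lra.
rewrite -natr1; field.
apply: lt0r_neq0; lra.
Qed.

Lemma Uf_le (R : realType) h M N (eN : N = (h * M)%N) (t : strat N (h + h)) :
  Uf R M t <= h%:R.
Proof.
rewrite -(Uf_total R eN t) /Uf; apply: ler_sum => k _.
by rewrite ler_pM2r ?Gs_le // invr_gt0 ltr0Sn.
Qed.

Lemma Uf_eq (R : realType) h M N (eN : N = (h * M)%N) (t : strat N (h + h)) :
  (forall k, alloc t k <= M)%N -> Uf R M t = h%:R.
Proof.
move=> H; rewrite -(Uf_total R eN t) /Uf; apply: eq_bigr => k _.
by rewrite Gs_eq.
Qed.

Lemma Uf_lt (R : realType) h M N (eN : N = (h * M)%N) (t : strat N (h + h)) k :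
  (M < alloc t k)%N -> Uf R M t < h%:R.
Proof.
move=> H; rewrite -(Uf_total R eN t) /Uf (bigD1 k) //= [X in _ < X](bigD1 k) //=.
apply: ltr_leD.
  by rewrite ltr_pM2r ?Gs_lt // invr_gt0 ltr0Sn.
apply: ler_sum => i _.
by rewrite ler_pM2r ?Gs_le // invr_gt0 ltr0Sn.
Qed.

Definition W (R : realType) N K (p : {ffun strat N K -> R}) (s : strat N K) : R :=
  \sum_t p t * payoff 1 s t.

Lemma payA_W (R : realType) N K (q p : {ffun strat N K -> R}) :
  exp_payA 1 q p = \sum_s q s * W p s.
Proof.
rewrite /exp_payA /W; apply: eq_bigr => s _; rewrite mulr_sumr.
by apply: eq_bigr => t _; rewrite mulrA.
Qed.

Lemma payB_W (R : realType) N K (p q : {ffun strat N K -> R}) :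
  exp_payB 1 p q = \sum_t q t * W p t.
Proof.
rewrite /exp_payB /W exchange_big; apply: eq_bigr => t _; rewrite mulr_sumr.
by apply: eq_bigr => s _; rewrite [p s * q t]mulrC -mulrA.
Qed.

Lemma pay_cs (R : realType) N K (p q : {ffun strat N K -> R}) :
  is_mixed p -> is_mixed q -> exp_payA 1 p q + exp_payB 1 p q = K%:R.
Proof.
move=> [_ hp] [_ hq].
rewrite /exp_payA /exp_payB -big_split /=.
transitivity (\sum_s \sum_t p s * q t * K%:R).
  apply: eq_bigr => s _; rewrite -big_split /=; apply: eq_bigr => t _.
  by rewrite -mulrDr payoff_cs.
under eq_bigr => s _ do rewrite -mulr_suml -mulr_sumr hq mulr1.
by rewrite -mulr_suml hp mul1r.
Qed.

Lemma mix_le (R : realType) N K (q : {ffun strat N K -> R}) (F : strat N K -> R) c :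
  is_mixed q -> (forall s, F s <= c) -> \sum_s q s * F s <= c.
Proof.
move=> [q0 q1] H.
apply: (le_trans (y := \sum_s q s * c)).
  by apply: ler_sum => s _; rewrite ler_wpM2l.
by rewrite -mulr_suml q1 mul1r.
Qed.

Lemma mix_lt (R : realType) N K (q : {ffun strat N K -> R}) (F : strat N K -> R) c s0 :
  is_mixed q -> (forall s, F s <= c) -> F s0 < c -> 0 < q s0 ->
  \sum_s q s * F s < c.
Proof.
move=> [q0 q1] H H0 Hq.
apply: (lt_le_trans (y := \sum_s q s * c)); last by rewrite -mulr_suml q1 mul1r.
rewrite (bigD1 s0) //= [X in _ < X](bigD1 s0) //=.
apply: ltr_leD; first by rewrite ltr_pM2l.
by apply: ler_sum => s _; rewrite ler_wpM2l.
Qed.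

Lemma nash_if (R : realType) N h (mu : {ffun strat N (h + h) -> R}) :
  is_mixed mu -> (forall t, W mu t <= h%:R) -> nash 1 mu mu.
Proof.
move=> hm hW.
have e1 := pay_cs hm hm.
have e2 : exp_payA 1 mu mu = exp_payB 1 mu mu by rewrite payA_W payB_W.
have e3 : exp_payA 1 mu mu = h%:R by move: e1; rewrite -e2 natrD; lra.
split => // [qA hq|qB hq].
  by rewrite e3 payA_W; apply: mix_le.
by rewrite -e2 e3 payB_W; apply: mix_le.
Qed.

Lemma nash_onlyif (R : realType) N h (mu pA pB : {ffun strat N (h + h) -> R}) s :
  is_mixed mu -> (forall t, W mu t <= h%:R) -> W mu s < h%:R ->
  nash 1 pA pB -> (0 < pA s \/ 0 < pB s) -> False.
Proof.
move=> hm hW hs [hA hB dA dB] hpos.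
have c1 := pay_cs hA hB.
have c2 := pay_cs hm hB.
have c3 := pay_cs hA hm.
have i1 := dA mu hm.
have i2 := dB mu hm.
rewrite payB_W in c2; rewrite payA_W in c3.
have SA := mix_le hA hW.
have SB := mix_le hB hW.
move: c1 c2 c3 i1 i2 SA SB; rewrite natrD.
case: hpos => hp.
  have := mix_lt hA hW hs hp; lra.
have := mix_lt hB hW hs hp; lra.
Qed.

Lemma splitL h (j : 'I_h) : split (lshift h j) = inl j.
Proof. exact: (unsplitK (inl j)). Qed.
Lemma splitR h (j : 'I_h) : split (rshift h j) = inr j.
Proof. exact: (unsplitK (inr j)). Qed.

Lemma sum_pair h M (F : 'I_(h + h) -> nat) (x : 'I_h -> nat) :
  (forall j, x j <= M)%N -> (forall j, F (lshift h j) = x j) ->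
  (forall j, F (rshift h j) = M - x j)%N -> (\sum_k F k = h * M)%N.
Proof.
move=> hx hl hr; rewrite big_split_ord /= -big_split /=.
rewrite (eq_bigr (fun _ => M)) ?sum_nat_const ?card_ord // => j _.
by rewrite hl hr subnKC.
Qed.

Lemma sum_shift (R : realType) M a (F : nat -> R) :
  \sum_(U < M.+1) F ((a + U) %% M.+1)%N = \sum_(v < M.+1) F v.
Proof.
have inj : injective (fun U : 'I_M.+1 => (inZp (a + U) : 'I_M.+1)).
  move=> U V /(congr1 val) /= /eqP; rewrite eqn_modDl !modn_small //.
  by move/eqP/val_inj.
by symmetry; rewrite (reindex_inj inj).
Qed.

Lemma sum_rev (R : realType) M a (F : nat -> R) :
  \sum_(U < M.+1) F (M - (a + U) %% M.+1)%N = \sum_(v < M.+1) F v.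
Proof.
rewrite (sum_shift M a (fun x => F (M - x)%N)).
symmetry; rewrite (reindex_inj rev_ord_inj) /=.
by apply: eq_bigr => v _; rewrite subSS.
Qed.

Lemma sum_ind (R : realType) (T : finType) (y : T) (G : T -> R) :
  \sum_x (y == x)%:R * G x = G y.
Proof.
rewrite (bigD1 y) //= eqxx mul1r big1 ?addr0 // => x.
by rewrite eq_sym => /negbTE ->; rewrite mul0r.
Qed.

Lemma exists_mu (R : realType) h M N (eN : N = (h * M)%N) (hMN : (M <= N)%N)
  (s : strat N (h + h)) (hs : forall k, (alloc s k <= M)%N) :
  exists mu : {ffun strat N (h + h) -> R},
    [/\ is_mixed mu, 0 < mu s & forall t, W mu t = Uf R M t].
Proof.
pose a := alloc s.
pose r1 (U : nat) (k : 'I_(h + h)) : nat := match split k with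
  | inl j => ((a (lshift h j) + U) %% M.+1)%N | inr j => (M - (a (lshift h j) + U) %% M.+1)%N end.
pose r2 (U : nat) (k : 'I_(h + h)) : nat := match split k with
  | inl j => ((M - a (rshift h j) + U) %% M.+1)%N
  | inr j => (M - (M - a (rshift h j) + U) %% M.+1)%N end.
pose s2f (k : 'I_(h + h)) : nat := match split k with
  | inl j => (M - a (rshift h j))%N | inr j => (M - a (lshift h j))%N end.
have modM : forall x, ((x %% M.+1)%N <= M)%N by move=> x; rewrite -ltnS ltn_pmod.
have b1 : forall U k, (r1 U k <= N)%N.
  move=> U k; apply: leq_trans hMN; rewrite /r1; case: (split k) => j.
    exact: modM.
  exact: leq_subr.
have b2 : forall U k, (r2 U k <= N)%N.
  move=> U k; apply: leq_trans hMN; rewrite /r2; case: (split k) => j.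
    exact: modM.
  exact: leq_subr.
have b3 : forall k, (s2f k <= N)%N.
  move=> k; apply: leq_trans hMN; rewrite /s2f; case: (split k) => j; exact: leq_subr.
have h1 : forall U, (\sum_k r1 U k)%N = N.
  move=> U; rewrite eN.
  apply: (sum_pair (x := fun j => ((a (lshift h j) + U) %% M.+1)%N)) => j.
  - exact: modM.
  - by rewrite /r1 splitL.
  - by rewrite /r1 splitR.
have h2 : forall U, (\sum_k r2 U k)%N = N.
  move=> U; rewrite eN.
  apply: (sum_pair (x := fun j => ((M - a (rshift h j) + U) %% M.+1)%N)) => j.
  - exact: modM.
  - by rewrite /r2 splitL.
  - by rewrite /r2 splitR.
have h3 : (\sum_k s2f k)%N = N.
  have hsum := sum_alloc s.
  rewrite big_split_ord /= in hsum; rewrite big_split_ord /=.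
  have eL : forall j, s2f (lshift h j) = (M - a (rshift h j))%N by move=> j; rewrite /s2f splitL.
  have eR : forall j, s2f (rshift h j) = (M - a (lshift h j))%N by move=> j; rewrite /s2f splitR.
  rewrite (eq_bigr _ (fun j _ => eL j)) (eq_bigr _ (fun j _ => eR j)).
  rewrite !sumnB ?sum_nat_const ?card_ord //.
  rewrite /a in hsum *. 
  have l1 : (\sum_(i < h) alloc s (lshift h i) <= h * M)%N.
    apply: (@leq_trans (\sum_(i < h) M)%N); first by apply: leq_sum => i _.
    by rewrite sum_nat_const card_ord.
  have l2 : (\sum_(i < h) alloc s (rshift h i) <= h * M)%N.
    apply: (@leq_trans (\sum_(i < h) M)%N); first by apply: leq_sum => i _.
    by rewrite sum_nat_const card_ord.
  lia.
pose P (U : 'I_M.+1) : strat N (h + h) :=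
  if U == ord0 then s else @mkstrat N (h + h) (r1 U) (b1 U) (h1 U).
pose Q (U : 'I_M.+1) : strat N (h + h) :=
  if U == ord0 then @mkstrat N (h + h) s2f b3 h3
  else @mkstrat N (h + h) (r2 U) (b2 U) (h2 U).
pose d : R := (2 * M.+1)%:R.
have d0 : 0 < d by rewrite /d ltr0n muln_gt0.
pose mu : {ffun strat N (h + h) -> R} :=
  [ffun x => \sum_(U < M.+1) (((P U == x)%:R + (Q U == x)%:R) / d)].
have smu : forall F, \sum_x mu x * F x = (\sum_U (F (P U) + F (Q U))) / d.
  move=> F; rewrite /mu; under eq_bigr => x _ do rewrite ffunE mulr_suml.
  rewrite exchange_big /= mulr_suml; apply: eq_bigr => U _.
  rewrite (eq_bigr (fun x => (P U == x)%:R * (F x / d) + (Q U == x)%:R * (F x / d))).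
    by rewrite big_split /= !sum_ind mulrDl.
  by move=> x _; ring.
have hM1 : (1 + M%:R : R) != 0 by rewrite addrC natr1 pnatr_eq0.
exists mu; split.
- split.
    move=> x; rewrite /mu ffunE; apply: sumr_ge0 => U _; apply: divr_ge0.
      by apply: addr_ge0; apply: ler0n.
    exact: ltW.
  have := smu (fun _ => 1).
  under eq_bigr do rewrite mulr1.
  move=> ->; rewrite sumr_const card_ord /d natrM -mulr_natr.
  by field.
- rewrite /mu ffunE (bigD1 ord0) //=.
  have P0 : P ord0 = s by rewrite /P eqxx.
  rewrite P0 eqxx.
  have t1 : 0 < (true%:R + (Q ord0 == s)%:R) / d.
    apply: divr_gt0 => //; have := ler0n R (Q ord0 == s).
    have -> : (true%:R : R) = 1 by [].
    lra.
  have t2 : 0 <= \sum_(i < M.+1 | i != ord0) ((P i == s)%:R + (Q i == s)%:R) / d.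
    apply: sumr_ge0 => U _; apply: divr_ge0; last exact: ltW.
    by apply: addr_ge0; apply: ler0n.
  by apply: (lt_le_trans t1); rewrite lerDl.
- move=> t; rewrite /W smu /Uf.
  rewrite (eq_bigr (fun U => \sum_k (g R (alloc t k) (alloc (P U) k)
                                     + g R (alloc t k) (alloc (Q U) k)))); last first.
    by move=> U _; rewrite !payoffE -big_split.
  rewrite exchange_big /= mulr_suml; apply: eq_bigr => k _.
  set c := alloc t k.
  suff -> : \sum_(U < M.+1) (g R c (alloc (P U) k) + g R c (alloc (Q U) k))
            = Gs R M c + Gs R M c.
    rewrite /d natrM -natr1; field.
    exact: hM1.
  have -> : \sum_(U < M.+1) (g R c (alloc (P U) k) + g R c (alloc (Q U) k))
      = \sum_(U < M.+1) (g R c (r1 U k) + g R c (r2 U k)).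
    rewrite (bigD1 ord0) //= [RHS](bigD1 ord0) //=; congr (_ + _); last first.
      apply: eq_bigr => U hU; rewrite /P /Q (negbTE hU) !alloc_mk //.
    rewrite /P /Q eqxx alloc_mk -/a /r1 /r2 /s2f.
    case: (split k) (splitK k) => j <- /=.
      rewrite !addn0 !modn_small // ltnS ?leq_subr //.
    by rewrite !addn0 !modn_small ?ltnS ?leq_subr // subKn // addrC.
  rewrite big_split /= /r1 /r2 /Gs.
  case: (split k) => j.
    by rewrite (sum_shift M _ (g R c)) (sum_shift M _ (g R c)).
  by rewrite (sum_rev M _ (g R c)) (sum_rev M _ (g R c)).
Qed.

Lemma core (R : realType) h M N (eN : N = (h * M)%N) (hMN : (M <= N)%N)
  (s : strat N (h + h)) :
  (exists pA pB : {ffun strat N (h + h) -> R},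
      nash 1 pA pB /\ (0 < pA s \/ 0 < pB s))
  <-> (forall k, (alloc s k <= M)%N).
Proof.
split.
- move=> [pA [pB [hn hp]]] k; rewrite leqNgt; apply/negP => hk.
  pose s0f (k : 'I_(h + h)) : nat := match split k with inl _ => M | inr _ => 0%N end.
  have b0 : forall k, (s0f k <= N)%N by move=> i; rewrite /s0f; case: (split i).
  have h0 : (\sum_k s0f k)%N = N.
    rewrite eN; apply: (sum_pair (x := fun _ => M)) => j //.
    - by rewrite /s0f splitL.
    - by rewrite /s0f splitR subnn.
  pose s0 := @mkstrat N (h + h) s0f b0 h0.
  have g0 : forall k, (alloc s0 k <= M)%N.
    by move=> i; rewrite alloc_mk /s0f; case: (split i).
  have [mu [hm _ hW]] := exists_mu R eN hMN g0.
  apply: (nash_onlyif (mu := mu) hm _ _ hn hp).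
    by move=> t; rewrite hW (Uf_le _ eN).
  by rewrite hW (Uf_lt _ eN hk).
- move=> hs.
  have [mu [hm hpos hW]] := exists_mu R eN hMN hs.
  exists mu, mu; split; last by left.
  by apply: nash_if hm _ => t; rewrite hW (Uf_le _ eN).
Qed.

Theorem corollary4 (R : realType) (N K : nat)
  (hN : (1 <= N)%N) (hK : (2 <= K)%N) (hKeven : ~~ odd K) (hdiv : (K %| N)%N)
  (s : strat N K) :
  (exists pA pB : {ffun strat N K -> R},
      nash 1 pA pB /\ (0 < pA s \/ 0 < pB s))
  <-> (forall k : 'I_K, (alloc s k <= (2 * N) %/ K)%N).
Proof.
have [h eK] : exists h, K = (h + h)%N.
  exists K./2; rewrite addnn -{1}(odd_double_half K).
  by move/negbTE: hKeven => ->.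
subst K.
case/dvdnP: hdiv => m eN; subst N.
have -> : ((2 * (m * (h + h))) %/ (h + h) = 2 * m)%N.
  by rewrite mulnA mulnK // ltnW.
apply: core.
- lia.
- nia.
Qed.
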